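(* Let $K\subset\mathbb R^n$ be a bounded convex set with nonempty interior such that $0\in K$. Then $$\ell(K)\,L(K^\circ)\ge\frac1{2n}\qquad\text{and}\qquad \ell(K^\circ)\,L(K)\ge\frac1{2n}.$$
   Context: $K^\circ=\{z\in\mathbb R^n: z\cdot x\le1\ \forall x\in K\}$ is the polar body. For a set $E$, $\ell(E)$ is the radius of the largest ball contained in $E$ (inner radius) and $L(E)$ the radius of the smallest ball containing $E$ (outer radius), with $L(E)=\infty$ if $E$ is unbounded. *)

(* Defs.v *)
From HB Require Import structures.
From mathcomp Require Import all_boot all_order all_algebra.
From mathcomp Require Import all_classical all_reals ereal.
Set Implicit Arguments. Unset Strict Implicit. Unset Printing Implicit Defensive.
Import Order.TTheory GRing.Theory Num.Theory.
Local Open Scope ring_scope.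
Local Open Scope classical_set_scope.

Section Defs.
Variables (R : realType) (n : nat).
Implicit Types (x y z c : 'rV[R]_n) (E K : set 'rV[R]_n).

Definition dotv x y : R := \sum_(i < n) x 0 i * y 0 i.
Definition enorm x : R := Num.sqrt (dotv x x).

Definition cball c (r : R) : set 'rV[R]_n := [set x | enorm (x - c) <= r].
Definition oball c (r : R) : set 'rV[R]_n := [set x | enorm (x - c) < r].

Definition convex_set K : Prop :=
  forall x y t, K x -> K y -> 0 <= t <= 1 -> K (t *: x + (1 - t) *: y).

Definition bounded_eucl K : Prop := exists M : R, forall x, K x -> enorm x <= M.

Definition nonempty_interior K : Prop :=
  exists c, exists2 r : R, 0 < r & oball c r `<=` K.

Definition polar K : set 'rV[R]_n := [set z | forall x, K x -> dotv z x <= 1].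

Definition inradius E : \bar R :=
  ereal_sup [set r%:E | r in [set r : R | 0 <= r /\ exists c, cball c r `<=` E]].

(* outer radius: inf of radii of balls containing E (= +oo if none, i.e. E unbounded) *)
Definition outradius E : \bar R :=
  ereal_inf [set r%:E | r in [set r : R | 0 <= r /\ exists c, E `<=` cball c r]].

End Defs.

(* Main.v *)
Require Import Defs.
From HB Require Import structures.
From mathcomp Require Import all_boot all_order all_algebra.
From mathcomp Require Import all_classical all_reals ereal.
From mathcomp Require Import ring lra.
Import Order.TTheory GRing.Theory Num.Theory.
Local Open Scope ring_scope.
Local Open Scope classical_set_scope.

Set Implicit Arguments. Unset Strict Implicit. Unset Printing Implicit Defensive.

Section Dot.
Variables (R : realType) (n : nat).
Local Notation V := 'rV[R]_n.
Implicit Types (x y z : V).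

Lemma dotvC x y : dotv x y = dotv y x.
Proof. by apply: eq_bigr => i _; rewrite mulrC. Qed.

Lemma dotvDl x y z : dotv (x + y) z = dotv x z + dotv y z.
Proof. by rewrite /dotv -big_split; apply: eq_bigr => i _; rewrite !mxE mulrDl. Qed.

Lemma dotvZl a x z : dotv (a *: x) z = a * dotv x z.
Proof. by rewrite /dotv mulr_sumr; apply: eq_bigr => i _; rewrite !mxE mulrA. Qed.

Lemma dotvNl x z : dotv (- x) z = - dotv x z.
Proof. by rewrite -scaleN1r dotvZl mulN1r. Qed.

Lemma dotvBl x y z : dotv (x - y) z = dotv x z - dotv y z.
Proof. by rewrite dotvDl dotvNl. Qed.

Lemma dotvDr x y z : dotv z (x + y) = dotv z x + dotv z y.
Proof. by rewrite dotvC dotvDl !(dotvC z). Qed.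
Lemma dotvZr a x z : dotv z (a *: x) = a * dotv z x.
Proof. by rewrite dotvC dotvZl dotvC. Qed.
Lemma dotvBr x y z : dotv z (x - y) = dotv z x - dotv z y.
Proof. by rewrite dotvC dotvBl !(dotvC z). Qed.

Lemma dotv0l z : dotv 0 z = 0.
Proof. by rewrite /dotv big1 // => i _; rewrite mxE mul0r. Qed.
Lemma dotv0r z : dotv z 0 = 0.
Proof. by rewrite dotvC dotv0l. Qed.

Lemma dotv_ge0 x : 0 <= dotv x x.
Proof. by rewrite /dotv sumr_ge0 // => i _; rewrite -expr2 sqr_ge0. Qed.

Lemma dotv_coord x (i : 'I_n) : x 0 i ^+ 2 <= dotv x x.
Proof.
rewrite /dotv (bigD1 i) //= expr2 lerDl sumr_ge0 // => j _.
by rewrite -expr2 sqr_ge0.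
Qed.

Lemma dotv_delta x (i : 'I_n) : dotv 'e_i x = x 0 i.
Proof.
rewrite /dotv (bigD1 i) //= big1 ?addr0; first by rewrite mxE !eqxx mul1r.
by move=> j /negbTE ji; rewrite mxE ji andbF mul0r.
Qed.

Lemma amgm x y : 2 * dotv x y <= dotv x x + dotv y y.
Proof.
have := dotv_ge0 (x - y).
rewrite dotvBl !dotvBr (dotvC y x); lra.
Qed.

Lemma par_aux (u w : V) : dotv (u - w) (u - w) <= 2 * dotv u u + 2 * dotv w w.
Proof.
have := dotv_ge0 (u + w).
rewrite !dotvBl !dotvBr !dotvDl !dotvDr (dotvC w u); lra.
Qed.

Lemma parallelogram x y c (r : R) :
  dotv (x - c) (x - c) <= r ^+ 2 -> dotv (y - c) (y - c) <= r ^+ 2 ->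
  dotv (x - y) (x - y) <= 4 * r ^+ 2.
Proof.
move=> hx hy.
have -> : x - y = (x - c) - (y - c) by rewrite opprB addrA subrK.
have := par_aux (x - c) (y - c); lra.
Qed.

Lemma enorm_le x (r : R) : 0 <= r -> (enorm x <= r) = (dotv x x <= r ^+ 2).
Proof.
move=> r0; rewrite /enorm -(ler_sqrt (dotv x x)) ?sqr_ge0 //.
by rewrite sqrtr_sqr ger0_norm.
Qed.

Lemma enorm_lt x (r : R) : 0 <= r -> (enorm x < r) = (dotv x x < r ^+ 2).
Proof.
move=> r0; case: (eqVneq r 0) => [->|rne].
  by rewrite expr0n /= /enorm !ltNge sqrtr_ge0 dotv_ge0.
have rp : 0 < r by rewrite lt_neqAle eq_sym rne.
by rewrite /enorm -(ltr_sqrt (dotv x x)) ?exprn_gt0 // sqrtr_sqr ger0_norm.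
Qed.

Lemma enorm_ge0 x : 0 <= enorm x.
Proof. exact: sqrtr_ge0. Qed.

Lemma dotvZZ a x : dotv (a *: x) (a *: x) = a ^+ 2 * dotv x x.
Proof. by rewrite dotvZl dotvZr mulrA expr2. Qed.

Lemma enormZ a x : enorm (a *: x) = `|a| * enorm x.
Proof. by rewrite /enorm dotvZZ sqrtrM ?sqr_ge0 // sqrtr_sqr. Qed.

End Dot.


Section HB.
Variables (R : realType).

Definition Inf (f : R -> R) := inf (range f).

Lemma Inf_le f t : (exists m, forall s, m <= f s) -> Inf f <= f t.
Proof.
move=> [m hm]; apply: ge_inf; last by exists t.
by exists m => _ [s _ <-].
Qed.

Lemma le_Inf f m : (forall s, m <= f s) -> m <= Inf f.
Proof.
move=> hm; apply: lb_le_inf; first by exists (f 0), 0.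
by move=> _ [s _ <-].
Qed.

Arguments Inf_le [f] t _.
Arguments le_Inf [f] m _.

Variable n : nat.
Local Notation V := 'rV[R]_n.
Implicit Types (x y w v : V).

Definition sublin (p : V -> R) :=
  (forall x y, p (x + y) <= p x + p y) /\
  (forall (l : R) x, 0 <= l -> p (l *: x) = l * p x).

Definition ext (p : V -> R) v (a : R) x : R :=
  Inf (fun t => p (x - t *: v) + t * a).

Section Step.
Variables (p : V -> R) (v : V) (a : R).
Hypothesis hp : sublin p.
Hypothesis ha1 : - p (- v) <= a.
Hypothesis ha2 : a <= p v.

Lemma p0 : p 0 = 0.
Proof. by have := hp.2 0 0 (lexx _); rewrite scale0r mul0r. Qed.

Lemma ext_lb x t : - p (- x) <= p (x - t *: v) + t * a.
Proof.
have h1 : p (- (t *: v)) <= p (- x) + p (x - t *: v).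
  by have := hp.1 (- x) (x - t *: v); rewrite addrA addNr add0r.
suff : 0 <= p (- (t *: v)) + t * a by lra.
case: (leP 0 t) => t0.
  have e : - (t *: v) = t *: (- v) by rewrite scalerN.
  rewrite e hp.2 //.
  have : 0 <= t * (p (- v) + a) by rewrite mulr_ge0 //; move: ha1; lra.
  rewrite mulrDr; lra.
have e : - (t *: v) = (- t) *: v by rewrite scaleNr.
rewrite e hp.2; last by lra.
have : 0 <= (- t) * (p v - a) by rewrite mulr_ge0 //; move: ha2; lra.
rewrite mulrBr !mulNr; lra.
Qed.

Lemma ext_bdd x : exists m, forall s, m <= p (x - s *: v) + s * a.
Proof. by exists (- p (- x)) => s; apply: ext_lb. Qed.

Lemma ext_le x : ext p v a x <= p x.
Proof.
rewrite /ext; have := Inf_le 0 (ext_bdd x).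
by rewrite scale0r subr0 mul0r addr0.
Qed.

Lemma ext_subadd x y : ext p v a (x + y) <= ext p v a x + ext p v a y.
Proof.
have H : forall t1 t2, ext p v a (x + y) <=
   (p (x - t1 *: v) + t1 * a) + (p (y - t2 *: v) + t2 * a).
  move=> t1 t2; apply: le_trans (Inf_le (t1 + t2) (ext_bdd (x + y))) _.
  have -> : x + y - (t1 + t2) *: v = (x - t1 *: v) + (y - t2 *: v).
    by rewrite scalerDl opprD !addrA; congr (_ + _); rewrite -!addrA; congr (_ + _); rewrite addrC.
  have := hp.1 (x - t1 *: v) (y - t2 *: v); lra.
have H2 : forall t2, ext p v a (x + y) - (p (y - t2 *: v) + t2 * a) <= ext p v a x.
  move=> t2; apply: le_Inf => t1; have := H t1 t2; lra.
suff : ext p v a (x + y) - ext p v a x <= ext p v a y by lra.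
apply: le_Inf => t2; have := H2 t2; lra.
Qed.

Lemma ext_hom (l : R) x : 0 <= l -> ext p v a (l *: x) = l * ext p v a x.
Proof.
move=> l0; case: (eqVneq l 0) => [->|ln0].
  rewrite mul0r scale0r; apply/eqP; rewrite eq_le; apply/andP; split.
    by have := ext_le 0; rewrite p0.
  by apply: le_Inf => s; have := ext_lb 0 s; rewrite oppr0 p0 oppr0.
have lp : 0 < l by rewrite lt_neqAle eq_sym ln0.
have H1 : forall t, ext p v a (l *: x) <= l * (p (x - t *: v) + t * a).
  move=> t; apply: le_trans (Inf_le (l * t) (ext_bdd (l *: x))) _.
  by rewrite -scalerA -scalerBr hp.2 // mulrDr mulrA.
have H2 : l^-1 * ext p v a (l *: x) <= ext p v a x.
  by apply: le_Inf => t; rewrite ler_pdivrMl.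
have H3 : forall t, l * ext p v a x <= p (l *: x - t *: v) + t * a.
  move=> t; rewrite -ler_pdivlMl //.
  apply: le_trans (Inf_le (l^-1 * t) (ext_bdd x)) _.
  have -> : l *: x - t *: v = l *: (x - (l^-1 * t) *: v).
    by rewrite scalerBr scalerA mulrA mulfV // mul1r.
  by rewrite hp.2 // mulrDr mulrA mulVf // mul1r mulrA.
apply/eqP; rewrite eq_le; apply/andP; split.
  by rewrite -ler_pdivrMl.
exact: le_Inf.
Qed.

Lemma ext_shift x s : ext p v a (x + s *: v) = ext p v a x + s * a.
Proof.
apply/eqP; rewrite eq_le; apply/andP; split.
  rewrite -lerBlDr; apply: le_Inf => t.
  have h := Inf_le (t + s) (ext_bdd (x + s *: v)).
  have e : x + s *: v - (t + s) *: v = x - t *: v.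
    by apply/rowP => i; rewrite !mxE; ring.
  rewrite e mulrDl in h; rewrite /ext; lra.
apply: le_Inf => t.
have h := Inf_le (t - s) (ext_bdd x).
have e : x - (t - s) *: v = x + s *: v - t *: v.
  by apply/rowP => i; rewrite !mxE; ring.
rewrite e mulrBl in h; rewrite /ext; lra.
Qed.

Lemma ext_keep w b : (forall y s, p (y + s *: w) = p y + s * b) ->
  forall x s, ext p v a (x + s *: w) = ext p v a x + s * b.
Proof.
move=> hw x s; apply/eqP; rewrite eq_le; apply/andP; split.
  rewrite -lerBlDr; apply: le_Inf => t.
  have h := Inf_le t (ext_bdd (x + s *: w)).
  have e : x + s *: w - t *: v = (x - t *: v) + s *: w.
    by apply/rowP => i; rewrite !mxE; ring.
  rewrite e hw in h; rewrite /ext; lra.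
apply: le_Inf => t.
have h := Inf_le t (ext_bdd x).
have e : x - t *: v = (x + s *: w - t *: v) + (- s) *: w.
  by apply/rowP => i; rewrite !mxE; ring.
rewrite e hw in h; rewrite /ext; lra.
Qed.

Lemma ext_sublin : sublin (ext p v a).
Proof. split; [exact: ext_subadd | exact: ext_hom]. Qed.

End Step.
End HB.


Section Iter.
Variables (R : realType) (n : nat).
Local Notation V := 'rV[R]_n.
Implicit Types (x y w v : V).

Definition ek (k : nat) : V := \row_(j < n) (if (j : nat) == k then 1 else 0).

Fixpoint iterP (p : V -> R) (k : nat) : V -> R :=
  match k with
  | 0 => p
  | k'.+1 => ext (iterP p k') (ek k') (iterP p k' (ek k'))
  end.

Lemma sublin_a (p : V -> R) v : sublin p -> - p (- v) <= p v.
Proof.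
move=> hp; have := hp.1 v (- v); rewrite addrN (p0 hp); lra.
Qed.

Lemma iter_sublin p k : sublin p -> sublin (iterP p k).
Proof.
move=> hp; elim: k => //= k ih.
by apply: ext_sublin => //; apply: sublin_a.
Qed.

Lemma iter_le p k x : sublin p -> iterP p k x <= p x.
Proof.
move=> hp; elim: k x => //= k ih x.
apply: le_trans (ih x).
apply: ext_le; [exact: iter_sublin | by apply: sublin_a; apply: iter_sublin | exact: lexx].
Qed.

Lemma iter_keep p w b k : sublin p ->
  (forall y s, p (y + s *: w) = p y + s * b) ->
  forall y s, iterP p k (y + s *: w) = iterP p k y + s * b.
Proof.
move=> hp hw; elim: k => //= k ih.
apply: ext_keep => //; [exact: iter_sublin | by apply: sublin_a; apply: iter_sublin].
Qed.

Lemma iter_e p j k : sublin p -> (j < k)%N ->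
  forall y s, iterP p k (y + s *: ek j) = iterP p k y + s * iterP p j (ek j).
Proof.
move=> hp; elim: k => // k ih; rewrite ltnS leq_eqVlt => /orP [/eqP ->|jk] y s.
  by rewrite /=; apply: ext_shift => //; [exact: iter_sublin | by apply: sublin_a; apply: iter_sublin].
rewrite /=; apply: ext_keep => //; [exact: iter_sublin | by apply: sublin_a; apply: iter_sublin|].
exact: ih.
Qed.

Definition trunc (y : V) (m : nat) : V := \row_(i < n) (if (i < m)%N then y 0 i else 0).

Lemma separation_sublin (p : V -> R) (q : V) : sublin p ->
  exists z : V, (forall x, dotv z x <= p x) /\ dotv z q = p q.
Proof.
move=> hp.
pose p1 := ext p q (p q).
have hp1 : sublin p1 by apply: ext_sublin => //; apply: sublin_a.
have hP : sublin (iterP p1 n) by exact: iter_sublin.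
pose z : V := \row_(i < n) iterP p1 i (ek i).
have Plin : forall y, iterP p1 n y = dotv z y.
  move=> y.
  have key : forall m, iterP p1 n (trunc y m) = dotv z (trunc y m).
    elim=> [|m ih].
      have -> : trunc y 0 = 0 by apply/rowP => i; rewrite !mxE.
      by rewrite dotv0r (p0 hP).
    case: (ltnP m n) => mn.
      have e : trunc y m.+1 = trunc y m + y 0 (Ordinal mn) *: ek m.
        apply/rowP => i; rewrite !mxE ltnS leq_eqVlt.
        case: (eqVneq (i : nat) m) => [him|him] /=.
          have -> : i = Ordinal mn by apply: val_inj.
          by rewrite ltnn mulr1 add0r.
        by rewrite mulr0 addr0.
      rewrite e iter_e // ih dotvDr dotvZr; congr (_ + _); congr (_ * _).
      rewrite /dotv (bigD1 (Ordinal mn)) //= big1 ?addr0.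
        by rewrite !mxE eqxx mulr1.
      move=> i /eqP hi; rewrite !mxE.
      have -> : ((i : nat) == m) = false.
        by apply/negbTE/eqP => him; apply: hi; apply: val_inj.
      by rewrite mulr0.
    have -> : trunc y m.+1 = trunc y m.
      apply/rowP => i; rewrite !mxE.
      have h1 : (i < m.+1)%N by apply: leq_trans (ltn_ord i) (leqW mn).
      have h2 : (i < m)%N by apply: leq_trans (ltn_ord i) mn.
      by rewrite h1 h2.
    exact: ih.
  have -> : y = trunc y n by apply/rowP => i; rewrite !mxE ltn_ord.
  exact: key.
exists z; split.
  move=> x; rewrite -Plin; apply: le_trans (@iter_le p1 n x hp1) _.
  by apply: ext_le => //; apply: sublin_a.
rewrite -Plin.
have -> : q = 0 + 1 *: q by rewrite add0r scale1r.
rewrite (iter_keep (b := p q)) //; last first.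
  by move=> y s; apply: ext_shift => //; apply: sublin_a.
by rewrite (p0 hP) add0r mul1r add0r scale1r.
Qed.

End Iter.


Section Gauge.
Variables (R : realType) (n : nat).
Local Notation V := 'rV[R]_n.
Implicit Types (x y w v : V).
Variables (K : set V) (c0 : V) (r0 : R).
Hypothesis hr0 : 0 < r0.
Hypothesis hball : oball c0 r0 `<=` K.
Hypothesis hconv : convex_set K.

Definition gset x := [set t : R | 0 < t /\ K (c0 + t^-1 *: x)].
Definition gauge x := inf (gset x).

Lemma Kc0 : K c0.
Proof. by apply: hball; rewrite /oball /= subrr /enorm dotv0l sqrtr0. Qed.

Lemma gset_ne x : gset x !=set0.
Proof.
have e0 := enorm_ge0 x. have hr := hr0.
exists ((enorm x + 1) / r0); split.
  by rewrite divr_gt0 //; lra.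
apply: hball; rewrite /oball /= (addrC c0) addrK enormZ.
rewrite invfM invrK ger0_norm; last by rewrite mulr_ge0 // ?invr_ge0; lra.
rewrite -mulrA ltr_pdivrMl; last lra.
by rewrite mulrC ltr_pM2r //; lra.
Qed.

Lemma gset_lb x : has_lbound (gset x).
Proof. by exists 0 => t [t0 _]; apply: ltW. Qed.

Lemma gauge_le x t : gset x t -> gauge x <= t.
Proof. by move=> ht; apply: ge_inf => //; apply: gset_lb. Qed.

Lemma le_gauge x m : (forall t, gset x t -> m <= t) -> m <= gauge x.
Proof. by move=> h; apply: lb_le_inf; [apply: gset_ne | exact: h]. Qed.

Lemma gauge_ge0 x : 0 <= gauge x.
Proof. by apply: le_gauge => t [t0 _]; apply: ltW. Qed.

Lemma gauge_K y : K y -> gauge (y - c0) <= 1.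
Proof.
move=> Ky; apply: gauge_le; split => //.
by rewrite invr1 scale1r addrC subrK.
Qed.

Lemma gauge_out q : ~ K q -> 1 <= gauge (q - c0).
Proof.
move=> Kq; rewrite leNgt; apply/negP => hlt.
have [t [t0 Kt] t1] := inf_lt (gset_ne (q - c0)) hlt.
apply: Kq.
have := hconv Kt Kc0 (t := t); rewrite ltW //= ltW //.
have -> : t *: (c0 + t^-1 *: (q - c0)) + (1 - t) *: c0 = q.
  apply/rowP => i; rewrite !mxE; field; lra.
by apply.
Qed.

Lemma gauge_subadd x y : gauge (x + y) <= gauge x + gauge y.
Proof.
have H : forall t u, gset x t -> gset y u -> gauge (x + y) <= t + u.
  move=> t u [t0 Kt] [u0 Ku]; apply: gauge_le; split; first lra.
  have lam : 0 <= t / (t + u) <= 1.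
    apply/andP; split; first by rewrite divr_ge0 //; lra.
    by rewrite ler_pdivrMr ?mul1r; lra.
  have := hconv Kt Ku lam.
  have -> : t / (t + u) *: (c0 + t^-1 *: x) + (1 - t / (t + u)) *: (c0 + u^-1 *: y)
     = c0 + (t + u)^-1 *: (x + y).
    apply/rowP => i; rewrite !mxE; field; lra.
  by [].
have H2 : forall u, gset y u -> gauge (x + y) - u <= gauge x.
  by move=> u hu; apply: le_gauge => t ht; have := H t u ht hu; lra.
suff : gauge (x + y) - gauge x <= gauge y by lra.
by apply: le_gauge => u hu; have := H2 u hu; lra.
Qed.

Lemma gauge_hom (l : R) x : 0 <= l -> gauge (l *: x) = l * gauge x.
Proof.
move=> l0; case: (eqVneq l 0) => [->|ln0].
  rewrite mul0r scale0r; apply/eqP; rewrite eq_le gauge_ge0 andbT.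
  rewrite leNgt; apply/negP => g0.
  have : gauge 0 <= gauge 0 / 2.
    by apply: gauge_le; split; [rewrite divr_gt0 | rewrite scaler0 addr0; exact: Kc0].
  lra.
have lp : 0 < l by rewrite lt_neqAle eq_sym ln0.
apply/eqP; rewrite eq_le; apply/andP; split.
  rewrite -ler_pdivrMl //; apply: le_gauge => t [t0 Kt].
  rewrite ler_pdivrMl //; apply: gauge_le; split; first by rewrite mulr_gt0.
  by rewrite scalerA invfM mulrAC mulVf // mul1r.
apply: le_gauge => t [t0 Kt].
rewrite -ler_pdivlMl //; apply: gauge_le; split; first by rewrite mulr_gt0 // invr_gt0.
by rewrite invfM invrK mulrC; move: Kt; rewrite scalerA.
Qed.

Lemma gauge_sublin : sublin gauge.
Proof. by split; [exact: gauge_subadd | exact: gauge_hom]. Qed.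

Lemma sep_point q : ~ K q ->
  exists z : V, (forall y, K y -> dotv z (y - c0) <= 1) /\ 1 <= dotv z (q - c0).
Proof.
move=> Kq; have [z [hz1 hz2]] := separation_sublin (q - c0) gauge_sublin.
exists z; split.
  by move=> y Ky; apply: le_trans (hz1 _) (gauge_K Ky).
by rewrite hz2; apply: gauge_out.
Qed.

End Gauge.


Section Helpers.
Variables (R : realType) (n : nat).
Local Notation V := 'rV[R]_n.
Implicit Types (x y w v : V).

Lemma ek_delta (k : 'I_n) : ek R n k = 'e_k.
Proof. apply/rowP => j; rewrite !mxE /=; have [->|h] := eqVneq j k; first by rewrite !eqxx. by rewrite ifN // (negbTE h). Qed.

Lemma dotv_ee (k : 'I_n) : dotv ('e_k : V) 'e_k = 1.
Proof. by rewrite dotv_delta mxE !eqxx. Qed.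

Lemma enorm_e (k : 'I_n) (s : R) : 0 <= s -> enorm (s *: ('e_k : V)) = s.
Proof. by move=> s0; rewrite enormZ /enorm dotv_ee sqrtr1 mulr1 ger0_norm. Qed.

Lemma two_pts (k : 'I_n) c c' (s rho : R) : 0 <= s -> 0 <= rho ->
  dotv (c + s *: 'e_k - c') (c + s *: 'e_k - c') <= rho ^+ 2 ->
  dotv (c - s *: 'e_k - c') (c - s *: 'e_k - c') <= rho ^+ 2 -> s <= rho.
Proof.
move=> s0 r0 h1 h2; have := parallelogram h1 h2.
have -> : c + s *: 'e_k - (c - s *: 'e_k) = (2 * s) *: ('e_k : V).
  by apply/rowP => i; rewrite !mxE; ring.
rewrite dotvZZ dotv_ee mulr1 => h.
have h' : s ^+ 2 <= rho ^+ 2 by lra.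
by rewrite -(ler_pXn2r (n:=2)) // nnegrE.
Qed.

Lemma avg (K : set V) : convex_set K -> forall m (f : nat -> V), (0 < m)%N ->
  (forall i, (i < m)%N -> K (f i)) -> K (m%:R^-1 *: \sum_(i < m) f i).
Proof.
move=> hc; elim=> // m ih f _ hf.
case: (posnP m) => [->|m0].
  by rewrite big_ord1 invr1 scale1r; apply: hf.
rewrite big_ord_recr /=.
have mp : (0 : R) < m%:R by rewrite ltr0n.
have lam : 0 <= (m%:R / m.+1%:R : R) <= 1.
  apply/andP; split; first by rewrite divr_ge0.
  by rewrite ler_pdivrMr ?ltr0n // mul1r ler_nat.
have := hc _ _ _ (ih f m0 (fun i hi => hf i (ltnW hi))) (hf m (ltnSn m)) lam.
have -> : m%:R / m.+1%:R *: (m%:R^-1 *: \sum_(i < m) f i) + (1 - m%:R / m.+1%:R) *: f m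
   = m.+1%:R^-1 *: (\sum_(i < m) f i + f m).
  apply/rowP => i; rewrite !mxE -!natr1.
  field; apply/andP; split; lra.
by [].
Qed.

End Helpers.


Section Main1.
Variables (R : realType) (n : nat).
Local Notation V := 'rV[R]_n.
Implicit Types (x y w v : V).

Lemma polar_bnd (K : set V) c rho : 0 <= rho -> polar K `<=` cball c rho ->
  forall w, polar K w -> dotv w w <= 4 * rho ^+ 2.
Proof.
move=> rho0 hpol w pw.
have h1 : dotv (w - c) (w - c) <= rho ^+ 2 by rewrite -enorm_le //; exact: hpol.
have h0 : dotv (0 - c) (0 - c) <= rho ^+ 2.
  by rewrite -enorm_le //; apply: hpol => x _; rewrite dotv0l.
by have := parallelogram h1 h0; rewrite subr0.
Qed.

Lemma claimA (K : set V) c0 r0 c rho :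
  0 < r0 -> oball c0 r0 `<=` K -> convex_set K -> K 0 -> 0 <= rho ->
  polar K `<=` cball c rho ->
  forall (k : 'I_n) (t : R), (2 * rho * t) ^+ 2 < 1 -> K (t *: 'e_k).
Proof.
move=> hr0 hball hconv K0 rho0 hpol k t ht.
apply: contrapT => Kq.
have [z [hz1 hz2]] := sep_point hr0 hball hconv Kq.
move: hz1 hz2; set q := t *: 'e_k => hz1 hz2.
have hzK : forall y, K y -> dotv z y <= 1 + dotv z c0.
  move=> y Ky; have := hz1 y Ky; rewrite dotvBr; lra.
have hzq : 1 + dotv z c0 <= dotv z q by move: hz2; rewrite dotvBr; lra.
have bnd := polar_bnd rho0 hpol.
case: (ltP 0 (1 + dotv z c0)) => apos.
  move: hzK hzq apos; set al := 1 + dotv z c0 => hzK hzq apos.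
  have pw : polar K (al^-1 *: z).
    by move=> x Kx; rewrite dotvZl ler_pdivrMl // mulr1; exact: hzK.
  have h2 := bnd _ pw.
  have hq : 1 <= dotv (al^-1 *: z) q by rewrite dotvZl ler_pdivlMl // mulr1.
  rewrite /q dotvZr (dotvC _ 'e_k) dotv_delta in hq.
  have h1 := dotv_coord (al^-1 *: z) k.
  move: hq h1 h2; set wk := (al^-1 *: z) 0 k; set W := dotv _ _ => hq h1 h2.
  have h3 : 1 <= (t * wk) ^+ 2 by rewrite expr_ge1 //; lra.
  have h4 : (t * wk) ^+ 2 <= (2 * rho * t) ^+ 2.
    rewrite !exprMn; have t2 := sqr_ge0 t.
    have : wk ^+ 2 <= 2 ^+ 2 * rho ^+ 2 by lra.
    move=> h; have := ler_wpM2r t2 h; lra.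
  lra.
have pl : forall l, 0 <= l -> polar K (l *: z).
  move=> l l0 x Kx; rewrite dotvZl.
  have := ler_wpM2l l0 (hzK x Kx).
  have : l * (1 + dotv z c0) <= 0 by apply: mulr_ge0_le0.
  lra.
have D0 := dotv_ge0 (q - c0).
move: D0; set D := dotv (q - c0) (q - c0) => D0.
pose l := 2 * rho ^+ 2 + D / 2 + 1.
have l0 : 0 <= l by rewrite /l; have := sqr_ge0 rho; lra.
have h1 := bnd _ (pl l l0).
have h2 := amgm (l *: z) (q - c0).
rewrite dotvZl in h2.
have lp : 0 < l by rewrite /l; have := sqr_ge0 rho; lra.
have h3 : l <= l * dotv z (q - c0) by rewrite ler_pMr.
have el : l = 2 * rho ^+ 2 + D / 2 + 1 by [].
move: h1 h2 h3 el; rewrite -/D; set W := dotv (l *: z) _; set L := l * _; lra.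
Qed.

End Main1.


Section Main2.
Variables (R : realType) (n : nat).
Local Notation V := 'rV[R]_n.
Implicit Types (x y w v : V).

Lemma sum_decomp (x : V) :
  x = n%:R^-1 *: \sum_(i < n) ((n%:R * dotv x (ek R n i)) *: ek R n i) :> V.
Proof.
case: (posnP n) => [n0|n0].
  by apply/rowP => j; have := ltn_ord j; rewrite {2}n0.
have N0 : (n%:R : R) != 0 by rewrite pnatr_eq0 -lt0n.
apply/rowP => j; rewrite mxE summxE (bigD1 j) //= big1.
  rewrite ek_delta dotvC dotv_delta.
  by rewrite !mxE !eqxx /= mulr1 addr0 mulrA mulVf // mul1r.
move=> i /eqP ij; rewrite !mxE.
have -> : ((j : nat) == i) = false by apply/negbTE/eqP => h; apply: ij; apply: val_inj.
by rewrite mulr0.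
Qed.

Lemma claimB (K : set V) c0 r0 c rho M : (0 < n)%N ->
  0 < r0 -> oball c0 r0 `<=` K -> convex_set K -> K 0 ->
  (forall x, K x -> enorm x <= M) -> 0 <= rho ->
  polar K `<=` cball c rho ->
  0 < rho /\ forall s, 0 < s -> 2 * rho * s < 1 -> cball 0 (s / n%:R) `<=` K.
Proof.
move=> hn hr0 hball hconv K0 hM rho0 hpol.
have hA := claimA hr0 hball hconv K0 rho0 hpol.
split.
  rewrite lt_neqAle rho0 andbT; apply/eqP => r0e.
  have := hA (Ordinal hn) (`|M| + 1); rewrite -r0e mulr0 mul0r expr0n /= ltr01.
  move=> /(_ isT) /hM; rewrite enorm_e; last by have := normr_ge0 M; lra.
  have := ler_norm M; lra.
move=> s s0 hs x; rewrite /cball /= subr0.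
have Np : (0 : R) < n%:R by rewrite ltr0n.
rewrite enorm_le; last by rewrite divr_ge0 // ltW.
move=> hx.
rewrite (sum_decomp x); apply: (@avg _ _ K hconv n (fun i => (n%:R * dotv x (ek R n i)) *: ek R n i)) => // i hi.
have -> : ek R n i = 'e_(Ordinal hi) by rewrite -ek_delta.
apply: hA.
have h1 := dotv_coord x (Ordinal hi).
have -> : dotv x 'e_(Ordinal hi) = x 0 (Ordinal hi) by rewrite dotvC dotv_delta.
move: h1; set xi := x 0 (Ordinal hi) => h1.
have h2 : (n%:R * xi) ^+ 2 <= s ^+ 2.
  rewrite exprMn.
  have : n%:R ^+ 2 * xi ^+ 2 <= n%:R ^+ 2 * (s / n%:R) ^+ 2.
    by apply: ler_wpM2l; [exact: sqr_ge0 | lra].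
  have e : (n%:R : R) ^+ 2 * (s / n%:R) ^+ 2 = s ^+ 2 by field; rewrite gt_eqF.
  by rewrite e.
have h3 : (2 * rho * (n%:R * xi)) ^+ 2 <= (2 * rho * s) ^+ 2.
  by have := ler_wpM2l (sqr_ge0 (2 * rho)) h2; rewrite -!exprMn.
have h4 : (2 * rho * s) ^+ 2 < 1.
  rewrite expr2; have : 0 <= 2 * rho * s by rewrite mulr_ge0 // ?mulr_ge0 // ltW.
  nra.
lra.
Qed.

End Main2.


Section Main3.
Variables (R : realType) (n : nat).
Local Notation V := 'rV[R]_n.
Implicit Types (x y w v : V).

Lemma claimC (K : set V) c rho : K 0 -> 0 < rho -> K `<=` cball c rho ->
  cball 0 ((2 * rho)^-1) `<=` polar K.
Proof.
move=> K0 rp hK z; rewrite /cball /= subr0.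
have u0 : 0 < (2 * rho)^-1 by rewrite invr_gt0 mulr_gt0.
rewrite enorm_le; last exact: ltW.
move=> hz x Kx.
have h1 : dotv (x - c) (x - c) <= rho ^+ 2 by rewrite -enorm_le; [exact: hK | exact: ltW].
have h0 : dotv (0 - c) (0 - c) <= rho ^+ 2 by rewrite -enorm_le; [exact: hK | exact: ltW].
have := parallelogram h1 h0; rewrite subr0 => hx.
have := amgm ((2 * rho) *: z) ((2 * rho)^-1 *: x).
rewrite dotvZl dotvZr !dotvZZ [2 * rho * _]mulrA mulfV ?mul1r; last by rewrite gt_eqF // mulr_gt0.
have e1 : (2 * rho) ^+ 2 * dotv z z <= 1.
  have := ler_wpM2l (sqr_ge0 (2 * rho)) hz.
  by rewrite -exprMn mulfV ?expr1n // gt_eqF // mulr_gt0.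
have e2 : (2 * rho)^-1 ^+ 2 * dotv x x <= 1.
  have := ler_wpM2l (sqr_ge0 (2 * rho)^-1) hx.
  have -> : (2 * rho)^-1 ^+ 2 * (4 * rho ^+ 2) = 1.
    by field; rewrite gt_eqF.
  by [].
lra.
Qed.

Lemma radius_bound (c c' : V) (s rho : R) : (0 < n)%N ->
  0 <= s -> 0 <= rho ->
  (forall x, enorm (x - c) <= s -> enorm (x - c') <= rho) -> s <= rho.
Proof.
move=> hn s0 r0 H; pose k := Ordinal hn.
have p1 : enorm (c + s *: 'e_k - c) <= s.
  by rewrite (addrC c) addrK enorm_e.
have p2 : enorm (c - s *: 'e_k - c) <= s.
  rewrite (addrC c) addrK -scaleNr enormZ normrN ger0_norm //.
  by rewrite /enorm dotv_ee sqrtr1 mulr1.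
apply: (two_pts (k := k) (c := c) (c' := c') s0 r0).
  by rewrite -enorm_le //; apply: H.
by rewrite -enorm_le //; apply: H.
Qed.

End Main3.


Unset Implicit Arguments.

Theorem mainTheorem11 (R : realType) (n : nat) (K : set 'rV[R]_n) :
  (0 < n)%N ->
  convex_set K -> bounded_eucl K -> nonempty_interior K -> K 0 ->
  (((2 * n%:R)^-1)%:E <= inradius K * outradius (polar K))%E /\
  (((2 * n%:R)^-1)%:E <= inradius (polar K) * outradius K)%E.
Proof.
move=> hn hconv [M hM] [c0 [r0 hr0 hball]] K0.
have M0 : 0 <= M by have := hM 0 K0; have := enorm_ge0 (0 : 'rV[R]_n); lra.
have Np : (0 : R) < n%:R by rewrite ltr0n.
have hn2 : (2 * n%:R : R)^-1 <= 2^-1.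
  rewrite lef_pV2 ?posrE ?mulr_gt0 //; have : (1 : R) <= n%:R by rewrite ler1n.
  lra.
have sub_ball : forall x, enorm (x - c0) <= r0 / 2 -> K x.
  by move=> x hx; apply: hball; rewrite /oball /=; lra.
pose T1 := [set r : R | 0 <= r /\ exists c, cball c r `<=` K].
have T1ub : forall r, T1 r -> r <= M.
  move=> r [r0' [c hc]]; apply: (radius_bound (c := c) (c' := 0) hn r0' M0).
  by move=> x hx; rewrite subr0; apply: hM; apply: hc.
have T1r : T1 (r0 / 2).
  by split; [lra | exists c0 => x; exact: sub_ball].
have hsT1 : has_sup T1 by split; [exists (r0 / 2) | exists M => r /T1ub].
have -> : inradius K = (sup T1)%:E.
  by rewrite /inradius ereal_sup_EFin //; case: hsT1.
have A0 : r0 / 2 <= sup T1 by apply: sup_upper_bound.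
move: A0; set A := sup T1 => A0.
have Ap : 0 < A by lra.
split.
  pose S1 := [set r : R | 0 <= r /\ exists c, polar K `<=` cball c r].
  rewrite /outradius -/S1.
  have [[rho Srho]|nS] := pselect (exists rho, S1 rho); last first.
    have -> : S1 = set0 by apply/seteqP; split => // r Sr; apply: nS; exists r.
    by rewrite image_set0 ereal_inf0 gt0_muley ?lee_fin ?leey.
  rewrite ereal_inf_EFin; last by exists rho.
    2: by exists 0 => r [].
  rewrite -EFinM lee_fin.
  have key : forall rh, S1 rh -> (2 * n%:R * A)^-1 <= rh.
    move=> rh [rh0 [c hc]].
    have [rp hB] := claimB hn hr0 hball hconv K0 hM rh0 hc.
    have hs : forall s, 0 < s -> 2 * rh * s < 1 -> s <= n%:R * A.
      move=> s s0 hs; rewrite -ler_pdivrMl //.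
      rewrite mulrC; apply: sup_upper_bound => //; split; first by rewrite divr_ge0 // ltW.
      by exists 0; apply: hB.
    have hb : (2 * rh)^-1 <= n%:R * A.
      rewrite leNgt; apply/negP => hlt.
      have hnA : 0 < n%:R * A by rewrite mulr_gt0.
      pose s := (n%:R * A + (2 * rh)^-1) / 2.
      have s1 : n%:R * A < s by rewrite /s; lra.
      have s2 : s < (2 * rh)^-1 by rewrite /s; lra.
      have : 2 * rh * s < 1.
        have h2 : (0 : R) < 2 * rh by rewrite mulr_gt0.
        by have := s2; rewrite -(ltr_pM2l h2) mulfV ?gt_eqF.
      move/(hs s); rewrite /s; lra.
    have h1 : 1 <= 2 * rh * (n%:R * A).
      by rewrite -ler_pdivrMl ?mulr_gt0 // mulr1.
    rewrite -[X in X <= _]mulr1 ler_pdivrMl ?mulr_gt0 //.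
    have e : 2 * n%:R * A * rh = 2 * rh * (n%:R * A) by ring.
    by rewrite e.
  have hinf : (2 * n%:R * A)^-1 <= inf S1 by apply: lb_le_inf; [exists rho | exact: key].
  have := ler_wpM2l (ltW Ap) hinf.
  by rewrite invfM mulrCA mulfV ?mulr1 // gt_eqF.
pose S2 := [set r : R | 0 <= r /\ exists c, K `<=` cball c r].
have S2lb : forall rh, S2 rh -> r0 / 2 <= rh.
  move=> rh [rh0 [c hc]]; apply: (radius_bound (c := c0) (c' := c) hn _ rh0).
    lra.
  by move=> x hx; apply: hc; apply: sub_ball.
have S2M : S2 M by split => //; exists 0 => x Kx; rewrite /cball /= subr0; apply: hM.
rewrite /outradius -/S2 ereal_inf_EFin; last by exists M.
  2: by exists (r0 / 2) => r /S2lb.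
have B0 : r0 / 2 <= inf S2 by apply: lb_le_inf; [exists M | exact: S2lb].
move: B0; set B := inf S2 => B0.
pose T2 := [set r : R | 0 <= r /\ exists c, cball c r `<=` polar K].
have T2r : forall rh, S2 rh -> T2 (2 * rh)^-1.
  move=> rh Srh; have rp : 0 < rh by have := S2lb _ Srh; lra.
  case: Srh => rh0 [c hc]; split; first by rewrite invr_ge0 mulr_ge0.
  by exists 0; apply: (claimC K0 rp hc).
have hsup : forall rh, S2 rh -> (((2 * rh)^-1)%:E <= inradius (polar K))%E.
  by move=> rh Srh; apply: ereal_sup_ubound; exists (2 * rh)^-1 => //; apply: T2r.
have BE : (0 < B%:E)%E by rewrite lte_fin; lra.
case ha : (inradius (polar K)) => [a| |].
- have key : forall rh, S2 rh -> (2 * a)^-1 <= rh.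
    move=> rh Srh; have := hsup _ Srh; rewrite ha lee_fin => h.
    have rp : 0 < rh by have := S2lb _ Srh; lra.
    have ap : 0 < a by apply: lt_le_trans h; rewrite invr_gt0 mulr_gt0.
    rewrite -(ler_pM2l (mulr_gt0 (ltr0Sn R 1) ap)) mulfV ?gt_eqF ?mulr_gt0 //.
    rewrite -(ler_pM2l (mulr_gt0 (ltr0Sn R 1) rp)) mulfV ?gt_eqF ?mulr_gt0 // in h.
    have e : 2 * a * rh = 2 * rh * a by ring.
    by rewrite e.
  have hB : (2 * a)^-1 <= B by apply: lb_le_inf; [exists M | exact: key].
  have ap : 0 < a.
    have := hsup _ S2M; rewrite ha lee_fin => h.
    by apply: lt_le_trans h; rewrite invr_gt0 mulr_gt0 // (lt_le_trans _ (S2lb _ S2M)) //; lra.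
  rewrite -EFinM lee_fin; apply: le_trans hn2 _.
  have := ler_wpM2l (ltW ap) hB.
  by rewrite invfM mulrCA mulfV ?mulr1 // gt_eqF.
- by rewrite gt0_mulye // leey.
- by have := hsup _ S2M; rewrite ha.
Qed.
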